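(* The duality gap between ADP and SFP is unbounded: for every $N\in\mathbb{N}$ there exist a directed graph $G=(V,A)$ and vertices $s,t\in V$ such that the minimum number of arc pairs needed to separate $s$ and $t$ in $G$ exceeds the maximum number of pairwise almost disjoint $s$-$t$-paths in $G$ by at least $N$.
   Context: Directed graphs may contain parallel arcs; paths are directed paths without repeated vertices. A set of paths is almost disjoint if every two of its paths have at most one arc in common. The optimization version of ADP asks for the maximum number of pairwise almost disjoint $s$-$t$-paths in $G$. A set $\mathcal{A}$ of unordered pairs of distinct arcs of $G$ separates $s$ and $t$ if every $s$-$t$-path in $G$ contains both arcs of at least one pair in $\mathcal{A}$; the optimization version of SFP asks for the minimum size of such a set. (The LP relaxations of the natural integer programs for these two problems form a primal-dual pair, so the SFP minimum is always at least the ADP maximum; the duality gap is their difference.) *)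

(* Defs.v *)
From mathcomp Require Import all_boot.
Set Implicit Arguments. Unset Strict Implicit. Unset Printing Implicit Defensive.

(* A finite directed multigraph: vertex type V, darc type A (parallel arcs
   allowed since distinct arcs may share tail and head), tail/head maps. *)
Record digraph := Digraph {
  dvert : finType;
  darc : finType;
  tail : darc -> dvert;
  head : darc -> dvert }.

Section Paths.
Variable G : digraph.

Fixpoint walk_from (x : dvert G) (p : seq (darc G)) : bool :=
  if p is a :: q then (tail a == x) && walk_from (head a) q else true.

Definition path_verts (s : dvert G) (p : seq (darc G)) : seq (dvert G) :=
  s :: map (@head G) p.

Definition is_st_path (s t : dvert G) (p : seq (darc G)) : bool :=
  [&& walk_from s p, last s (map (@head G) p) == t & uniq (path_verts s p)].

Definition almost_disjoint_paths (s t : dvert G) (F : seq (seq (darc G))) : Prop :=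
  [/\ uniq F, all (is_st_path s t) F &
      forall p q, p \in F -> q \in F -> p != q ->
        #|[set a | (a \in p) && (a \in q)]| <= 1].

Definition separating_pairs (s t : dvert G) (P : {set {set darc G}}) : Prop :=
  (forall e, e \in P -> #|e| = 2) /\
  (forall p, is_st_path s t p ->
     exists2 e, e \in P & forall a, a \in e -> a \in p).

End Paths.

Arguments walk_from {G} x p.
Arguments path_verts {G} s p.
Arguments is_st_path {G} s t p.
Arguments almost_disjoint_paths {G} s t F.
Arguments separating_pairs {G} s t P.

(* Main.v *)
Require Import Defs.
From mathcomp Require Import all_boot.
Set Implicit Arguments. Unset Strict Implicit. Unset Printing Implicit Defensive.

Section Gadget.
Variable N : nat.
Definition V := (bool + ('I_N * 'I_5))%type.
Definition Ar := ('I_N * 'I_4 * bool)%type.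
Definition sv : V := inl false.
Definition tv : V := inl true.
Definition tl (a : Ar) : V :=
  if a.1.2 == ord0 then sv else inr (a.1.1, widen_ord (leqnSn 4) a.1.2).
Definition hd (a : Ar) : V :=
  if a.1.2 == ord_max then tv else inr (a.1.1, lift ord0 a.1.2).
Definition Gr := @Digraph V Ar tl hd.
Definition s0 : 'I_4 := @Ordinal 4 0 isT.
Definition s1 : 'I_4 := @Ordinal 4 1 isT.
Definition s2 : 'I_4 := @Ordinal 4 2 isT.
Definition s3 : 'I_4 := @Ordinal 4 3 isT.
Definition W := (bool * bool * bool * bool)%type.
Definition bitf (w : W) (i : 'I_4) : bool :=
  match val i with 0 => w.1.1.1 | 1 => w.1.1.2 | 2 => w.1.2 | _ => w.2 end.
Definition pth c (w : W) : seq Ar :=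
  [:: (c, s0, bitf w s0); (c, s1, bitf w s1); (c, s2, bitf w s2); (c, s3, bitf w s3)].

Lemma tl_neq_t a : (tl a == tv) = false.
Proof. by rewrite /tl; case: ifP. Qed.

Lemma tl_inr a c j : (tl a == inr (c, j)) =
  [&& a.1.2 != ord0, a.1.1 == c & val a.1.2 == val j].
Proof. by rewrite /tl; case: ifP => //= _; rewrite -!val_eqE /= xpair_eqE. Qed.

Lemma path_char p : @is_st_path Gr sv tv p ->
  exists c w, p = pth c w.
Proof.
case/and3P => Hw Hl _.
case: p Hw Hl => [|[[c [[|[|[|[|i]]]] Hi]] b0] p] //=; rewrite /hd /=.
case: p => [|[[c1 [[|[|[|[|i]]]] Hi1]] b1] p] //=;
  rewrite tl_inr /bump /= ?add0n ?addn0 /= ?andbF ?andbT //; case/andP => /eqP -> {c1}; rewrite /hd /=.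
case: p => [|[[c2 [[|[|[|[|i]]]] Hi2]] b2] p] //=;
  rewrite tl_inr /bump /= ?add0n ?addn0 /= ?andbF ?andbT //; case/andP => /eqP -> {c2}; rewrite /hd /=.
case: p => [|[[c3 [[|[|[|[|i]]]] Hi3]] b3] p] //=;
  rewrite tl_inr /bump /= ?add0n ?addn0 /= ?andbF ?andbT //; case/andP => /eqP -> {c3}; rewrite /hd /=.
case: p => [|a p] /=; last by rewrite tl_neq_t.
move=> _ _; exists c, (b0, b1, b2, b3).
by rewrite /pth /s0 /s1 /s2 /s3 (bool_irrelevance Hi isT) (bool_irrelevance Hi1 isT) (bool_irrelevance Hi2 isT) (bool_irrelevance Hi3 isT).
Qed.



Lemma inr_eq (x y : 'I_N * 'I_5) : (inr x == inr y :> V) = (x == y).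
Proof. by []. Qed.
Lemma inr_tv (x : 'I_N * 'I_5) : (inr x == tv :> V) = false.
Proof. by []. Qed.

Lemma pth_path c w : @is_st_path Gr sv tv (pth c w).
Proof.
by rewrite /is_st_path /= /tl /hd /= !inE !inr_eq !xpair_eqE !eqxx /=.
Qed.

Lemma mem_pth c w (a : Ar) : (a \in pth c w) = (a.1.1 == c) && (a.2 == bitf w a.1.2).
Proof.
case: a => [[c' [[|[|[|[|i]]]] H]] b] //=; rewrite !inE /= !xpair_eqE /=;
  rewrite /s0 /s1 /s2 /s3 -!val_eqE /= ?andbT ?andbF ?orbF //.
Qed.

Definition P0 : {set {set Ar}} :=
  [set [set (x.1.1, s0, x.1.2); (x.1.1, s1, x.2)] | x : 'I_N * bool * bool].

Lemma sep_P0 : @separating_pairs Gr sv tv P0.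
Proof.
split.
  move=> e /imsetP [x _ ->]; rewrite cards2.
  by rewrite !xpair_eqE -val_eqE /= andbF.
move=> p /path_char [c [w ->]].
exists [set (c, s0, bitf w s0); (c, s1, bitf w s1)].
  by apply/imsetP; exists (c, bitf w s0, bitf w s1).
by move=> a; rewrite !inE => /orP [] /eqP ->; rewrite eqxx ?orbT.
Qed.

Definition Sint (p q : seq Ar) := [set a | (a \in p) && (a \in q)].

Lemma two_card (T : finType) (A : {set T}) x y : x \in A -> y \in A -> x != y -> 1 < #|A|.
Proof.
move=> Hx Hy Hxy; rewrite (cardD1 x) Hx ltnS; apply/card_gt0P; exists y.
by rewrite !inE eq_sym Hxy Hy.
Qed.

Lemma agree_ij c w v (i j : 'I_4) : i != j -> bitf w i = bitf v i -> bitf w j = bitf v j ->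
  1 < #|Sint (pth c w) (pth c v)|.
Proof.
move=> Hij Hi Hj; apply: (@two_card _ _ (c, i, bitf w i) (c, j, bitf w j)).
- by rewrite inE !mem_pth /= Hi !eqxx.
- by rewrite inE !mem_pth /= Hj !eqxx.
by rewrite !xpair_eqE (negbTE Hij) andbF.
Qed.

Definition agr (w v : W) :=
  let e i := bitf w i == bitf v i in
  [|| e s0 && e s1, e s0 && e s2, e s0 && e s3, e s1 && e s2, e s1 && e s3 | e s2 && e s3].

Lemma agr_card c w v : agr w v -> 1 < #|Sint (pth c w) (pth c v)|.
Proof.
rewrite /agr /=.
by case/or4P => [/andP[/eqP H1 /eqP H2]|/andP[/eqP H1 /eqP H2]|/andP[/eqP H1 /eqP H2]|
  /orP[/andP[/eqP H1 /eqP H2]|/orP[/andP[/eqP H1 /eqP H2]|/andP[/eqP H1 /eqP H2]]]];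
  apply: agree_ij H1 H2.
Qed.

Lemma three_words (u v w : W) : agr u v || agr u w || agr v w.
Proof.
case: u => [[[a0 a1] a2] a3]; case: v => [[[b0 b1] b2] b3]; case: w => [[[d0 d1] d2] d3].
by case: a0; case: a1; case: a2; case: a3; case: b0; case: b1; case: b2; case: b3;
  case: d0; case: d1; case: d2; case: d3.
Qed.

Definition inside (e : {set Ar}) (p : seq Ar) := forall a, a \in e -> a \in p.

Lemma bitf_mk (f : 'I_4 -> bool) m : bitf (f s0, f s1, f s2, f s3) m = f m.
Proof.
case: m => [[|[|[|[|i]]]] H] //=.
- by rewrite /s0 (bool_irrelevance H isT).
- by rewrite /s1 (bool_irrelevance H isT).
- by rewrite /s2 (bool_irrelevance H isT).
- by rewrite /s3 (bool_irrelevance H isT).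
Qed.

Lemma cover c (e1 e2 : {set Ar}) : #|e1| = 2 -> #|e2| = 2 ->
  exists w, ~ inside e1 (pth c w) /\ ~ inside e2 (pth c w).
Proof.
move=> /eqP/cards2P [x1 [y1 [_ E1]]] /eqP/cards2P [x2 [y2 [Hxy E2]]].
pose i1 := x1.1.2.
pose z := if x2.1.2 != i1 then x2 else y2.
pose f m := if m == i1 then ~~ x1.2 else if m == z.1.2 then ~~ z.2 else false.
exists (f s0, f s1, f s2, f s3); split.
  move/(_ x1); rewrite E1 in_set2 eqxx => /(_ isT); rewrite mem_pth bitf_mk /f eqxx.
  by case: (x1.2); rewrite andbF.
move=> H; have Hx := H x2 ltac:(by rewrite E2 in_set2 eqxx).
have Hy := H y2 ltac:(by rewrite E2 in_set2 eqxx orbT).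
rewrite !mem_pth !bitf_mk /f in Hx Hy.
case E: (x2.1.2 != i1).
  move: Hx; rewrite /z E (negbTE E) eqxx.
  by case: (x2.2); rewrite andbF.
move/negbFE/eqP: E => E.
case E': (y2.1.2 == i1).
  move/eqP: E' => E'.
  move: Hx Hy; rewrite E E' eqxx => /andP [/eqP Hx1 /eqP Hx2] /andP [/eqP Hy1 /eqP Hy2].
  clear -Hxy Hx1 Hx2 Hy1 Hy2 E E'; move: Hxy.
  case: x2 Hx1 Hx2 E => [[a1 a2] a3] /= -> -> ->.
  case: y2 Hy1 Hy2 E' => [[b1 b2] b3] /= -> -> ->.
  by rewrite eqxx.
move: Hy; rewrite /z E eqxx /= E' eqxx.
by case: (y2.2); rewrite andbF.
Qed.

Definition Qc (c : 'I_N) (e : {set Ar}) := [forall a in e, a.1.1 == c].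
Definition Pc (P : {set {set Ar}}) c := [set e in P | Qc c e].

Lemma Pc_ge3 (P : {set {set Ar}}) c : @separating_pairs Gr sv tv P -> 2 < #|Pc P c|.
Proof.
case=> Hcard Hsep.
have cov w : exists2 e, e \in Pc P c & inside e (pth c w).
  have [e eP He] := Hsep _ (pth_path c w).
  exists e => //; rewrite inE eP /=; apply/forall_inP => a /He.
  by rewrite mem_pth => /andP [].
rewrite ltnNge; apply/negP => Hle.
have [e1 e1P _] := cov (false, false, false, false).
pose e2 := odflt e1 [pick e in Pc P c :\ e1].
have Hall : forall e, e \in Pc P c -> e = e1 \/ e = e2.
  move=> e He; case: (eqVneq e e1) => [->|Hne]; [by left | right].
  have eR : e \in Pc P c :\ e1 by rewrite in_setD1 Hne He.
  have HR : #|Pc P c :\ e1| <= 1.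
    by move: Hle; rewrite (cardsD1 e1) e1P.
  rewrite /e2; case: pickP => [e' e'R|/(_ e)]; last by rewrite eR.
  by move/card_le1_eqP: HR => HR; apply: HR.
have inP e : e \in Pc P c -> #|e| = 2.
  by rewrite inE => /andP [/Hcard].
have e2P : e2 \in Pc P c.
  by rewrite /e2; case: pickP => [e' |] //=; rewrite inE => /andP [].
have [w [H1 H2]] := cover c (inP _ e1P) (inP _ e2P).
have [e eP He] := cov w.
by case: (Hall e eP) => Ee; subst e.
Qed.

Lemma sumPc (P : {set {set Ar}}) : (forall e, e \in P -> #|e| = 2) ->
  \sum_(c < N) #|Pc P c| <= #|P|.
Proof.
move=> Hcard.
have -> : \sum_(c < N) #|Pc P c| = \sum_(c < N) \sum_(e in P) (if Qc c e then 1 else 0).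
  apply: eq_bigr => c _; rewrite -sum1_card -big_mkcondr /=.
  by apply: eq_bigl => e; rewrite inE.
rewrite exchange_big /= -sum1_card; apply: leq_sum => e eP.
have : 0 < #|e| by rewrite Hcard.
case/card_gt0P => a ae.
rewrite (bigD1 a.1.1) //= big1 ?addn0; first by case: ifP.
move=> c /negbTE Hc; case: ifP => // /forall_inP /(_ a ae) /eqP Ea.
by rewrite Ea eqxx in Hc.
Qed.

Definition inc (c : 'I_N) (p : seq Ar) := if p is a :: _ then a.1.1 == c else false.

Lemma inc_pth c c' w : inc c (pth c' w) = (c' == c).
Proof. by []. Qed.

Lemma count_le2 (F : seq (seq Ar)) c : @almost_disjoint_paths Gr sv tv F ->
  count (inc c) F <= 2.
Proof.
case=> Hu Hall Hd.
rewrite -size_filter.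
have Hu' := filter_uniq (inc c) Hu.
case E: (filter (inc c) F) Hu' => [|p1 [|p2 [|p3 r]]] //= Hu'.
have mem q : q \in filter (inc c) F -> exists w, q \in F /\ q = pth c w.
  rewrite mem_filter => /andP [Hq qF].
  have := allP Hall q qF => /path_char [c' [w Eq]].
  by move: Hq; rewrite Eq inc_pth => /eqP <-; exists w; split => //; rewrite -Eq.
have [w1 [p1F E1]] := mem p1 ltac:(by rewrite E inE eqxx).
have [w2 [p2F E2]] := mem p2 ltac:(by rewrite E !inE eqxx orbT).
have [w3 [p3F E3]] := mem p3 ltac:(by rewrite E !inE eqxx !orbT).
move: Hu'; rewrite !inE !negb_or => /andP [/and3P [n12 n13 _] /andP [/andP [n23 _] _]].
have H12 := Hd _ _ p1F p2F n12.
have H13 := Hd _ _ p1F p3F n13.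
have H23 := Hd _ _ p2F p3F n23.
rewrite E1 E2 E3 in H12 H13 H23.
case/orP: (three_words w1 w2 w3) => [/orP []|] /(agr_card c) H.
- by move: H12; rewrite leqNgt H.
- by move: H13; rewrite leqNgt H.
- by move: H23; rewrite leqNgt H.
Qed.

Lemma sizeF (F : seq (seq Ar)) : @almost_disjoint_paths Gr sv tv F ->
  size F <= \sum_(c < N) 2.
Proof.
move=> HF; have [_ Hall _] := HF.
apply: (@leq_trans (\sum_(c < N) count (inc c) F)); last first.
  by apply: leq_sum => c _; apply: count_le2.
have -> : \sum_(c < N) count (inc c) F = \sum_(c < N) \sum_(p <- F) (if inc c p then 1 else 0).
  by apply: eq_bigr => c _; rewrite -sum1_count big_mkcond.
rewrite exchange_big /= -sum1_size big_seq_cond [X in _ <= X]big_seq_cond.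
apply: leq_sum => p /andP [pF _].
have [c [w ->]] := path_char (allP Hall p pF).
by rewrite (bigD1 c) //= eqxx.
Qed.
End Gadget.

Theorem lemma1 : forall N : nat,
  exists (G : digraph) (s t : dvert G),
    s != t /\
    (exists P : {set {set darc G}}, separating_pairs s t P) /\
    (forall (P : {set {set darc G}}) (F : seq (seq (darc G))),
        separating_pairs s t P -> almost_disjoint_paths s t F ->
        size F + N <= #|P|).
Proof.
move=> N; exists (Gr N), (sv N), (tv N); split; first by [].
split; first by exists (P0 N); apply: sep_P0.
move=> P F HP HF.
have HA := sizeF HF.
have HB : \sum_(c < N) 3 <= #|P|.
  apply: leq_trans (sumPc HP.1); apply: leq_sum => c _; exact: Pc_ge3.
rewrite !sum_nat_const card_ord in HA HB.
apply: leq_trans HB; rewrite mulnS addnC leq_add2l.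
exact: HA.
Qed.
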